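(* Let $(P,\mathcal T)$ be a hybrid program and $='$ a binary constraint predicate interpreted in every model of $\mathcal T$ as the identity relation. Suppose that in every rule $H\leftarrow C,L_1,\dots,L_n$ of $P$ all arguments of the head $H=p(s_1,\dots,s_m)$ are variables, and every variable occurs at most once in $H,L_1,\dots,L_n$ altogether (other occurrences may only be in $C$). Then $P$ is congruent w.r.t. $\mathcal T$: for every rule predicate $p$ of arity $m$ and ground terms $t_1,\dots,t_m,u_1,\dots,u_m$ with $\mathcal T\models t_1='u_1\wedge\dots\wedge t_m='u_m$, $(P,\mathcal T)\models_{\mathrm{wf}}p(\bar t)$ iff $(P,\mathcal T)\models_{\mathrm{wf}}p(\bar u)$.
   Context: Fix a first-order alphabet: a set $\mathcal F$ of function symbols containing at least one constant, a set of variables, and predicate symbols partitioned into rule predicates $\mathcal P_R$ and constraint predicates $\mathcal P_C$. An external theory $\mathcal T$ is a set of first-order axioms over $\mathcal P_C,\mathcal F$ with standard 2-valued semantics; certain formulas over $\mathcal P_C,\mathcal F$ are called constraints. A hybrid rule is $H\leftarrow C,L_1,\dots,L_n$ with $H$ a rule atom, $L_i$ rule literals, $C$ a constraint; a hybrid program is $(P,\mathcal T)$ with $P$ a set of hybrid rules. For a model $M_0$ of $\mathcal T$, $P/M_0$ is the ground normal program of all $H\theta\leftarrow L_1\theta,\dots,L_n\theta$ with $\theta$ mapping the free variables of a rule $H\leftarrow C,\bar L$ of $P$ to ground terms and $M_0\models C\theta$. $WF(Q)$ denotes the (3-valued Herbrand) well-founded model of a ground normal program $Q$. $(P,\mathcal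 T)\models_{\mathrm{wf}}F$ iff $F$ is true (3-valued) in $WF(P/M_0)$ for every model $M_0$ of $\mathcal T$. *)

(* Defs.v *)
From Stdlib Require Import List Arith.
Import ListNotations.
Set Implicit Arguments.

(* Function symbols, rule predicates P_R and constraint predicates P_C
   (two disjoint types = a partition), each with an arity.  Variables are nat. *)
Record signature := {
  Fsym : Type;  farity : Fsym -> nat;
  PR   : Type;  rarity : PR -> nat;
  PC   : Type;  carity : PC -> nat
}.

Section Syntax.
Variable S : signature.

Inductive term : Type :=
| TVar (x : nat)
| TApp (f : Fsym S) (args : list term).

Inductive gterm : Type :=
| GApp (f : Fsym S) (args : list gterm).

Fixpoint wf_term (t : term) : Prop :=
  match t with
  | TVar _ => True
  | TApp f args => length args = farity S f /\
      (fix go (l : list term) : Prop :=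
         match l with nil => True | a :: l' => wf_term a /\ go l' end) args
  end.

Fixpoint wf_gterm (t : gterm) : Prop :=
  match t with
  | GApp f args => length args = farity S f /\
      (fix go (l : list gterm) : Prop :=
         match l with nil => True | a :: l' => wf_gterm a /\ go l' end) args
  end.

Fixpoint to_term (t : gterm) : term :=
  match t with GApp f args => TApp f (map to_term args) end.

Fixpoint occ (t : term) : list nat :=
  match t with
  | TVar x => [x]
  | TApp _ args => flat_map occ args
  end.

Fixpoint gsubst (th : nat -> gterm) (t : term) : gterm :=
  match t with
  | TVar x => th x
  | TApp f args => GApp f (map (gsubst th) args)
  end.

Inductive formula : Type :=
| FTrue | FFalse
| FAtom (c : PC S) (args : list term)
| FEq (t u : term)
| FNot (phi : formula)
| FAnd (phi psi : formula)
| FOr (phi psi : formula)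
| FImp (phi psi : formula)
| FAll (x : nat) (phi : formula)
| FEx (x : nat) (phi : formula).

Fixpoint wf_formula (phi : formula) : Prop :=
  match phi with
  | FTrue | FFalse => True
  | FAtom c args => length args = carity S c /\ Forall wf_term args
  | FEq t u => wf_term t /\ wf_term u
  | FNot p => wf_formula p
  | FAnd p q | FOr p q | FImp p q => wf_formula p /\ wf_formula q
  | FAll _ p | FEx _ p => wf_formula p
  end.

Record ratom := { apred : PR S; aargs : list term }.
Inductive literal := LPos (a : ratom) | LNeg (a : ratom).
Definition lit_atom (l : literal) : ratom :=
  match l with LPos a => a | LNeg a => a end.

Record rule := { rhead : ratom; rconstr : formula; rbody : list literal }.

Definition wf_ratom (a : ratom) : Prop :=
  length (aargs a) = rarity S (apred a) /\ Forall wf_term (aargs a).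

Definition wf_rule (r : rule) : Prop :=
  wf_ratom (rhead r) /\ wf_formula (rconstr r) /\
  Forall (fun l => wf_ratom (lit_atom l)) (rbody r).

Definition linear_rule (r : rule) : Prop :=
  Forall (fun s => exists x, s = TVar x) (aargs (rhead r)) /\
  NoDup (flat_map occ (aargs (rhead r)) ++
         flat_map (fun l => flat_map occ (aargs (lit_atom l))) (rbody r)).

(* A structure: domain, interpretation of function symbols and constraint
   predicates (given on lists; only argument lists of the right arity matter). *)
Record structure := {
  dom  : Type;
  fint : Fsym S -> list dom -> dom;
  pint : PC S -> list dom -> Prop
}.

Fixpoint eval (M : structure) (rho : nat -> dom M) (t : term) : dom M :=
  match t with
  | TVar x => rho x
  | TApp f args => fint M f (map (eval M rho) args)
  end.

Fixpoint geval (M : structure) (t : gterm) : dom M :=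
  match t with GApp f args => fint M f (map (geval M) args) end.

Definition upd (M : structure) (rho : nat -> dom M) (x : nat) (d : dom M) :
  nat -> dom M := fun y => if Nat.eqb y x then d else rho y.

Fixpoint sat (M : structure) (rho : nat -> dom M) (phi : formula) : Prop :=
  match phi with
  | FTrue => True
  | FFalse => False
  | FAtom c args => pint M c (map (eval M rho) args)
  | FEq t u => eval M rho t = eval M rho u
  | FNot p => ~ sat M rho p
  | FAnd p q => sat M rho p /\ sat M rho q
  | FOr p q => sat M rho p \/ sat M rho q
  | FImp p q => sat M rho p -> sat M rho q
  | FAll x p => forall d, sat M (upd M rho x d) p
  | FEx x p => exists d, sat M (upd M rho x d) p
  end.

(* M is a model of the theory T (axioms with free variables read universally) *)
Definition is_model (M : structure) (T : formula -> Prop) : Prop :=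
  forall phi, T phi -> forall rho, sat M rho phi.

Definition entails (T : formula -> Prop) (phi : formula) : Prop :=
  forall M : structure, is_model M T -> forall rho, sat M rho phi.

Definition sat_inst (M : structure) (th : nat -> gterm) (C : formula) : Prop :=
  sat M (fun x => geval M (th x)) C.

Definition gatom : Type := (PR S * list gterm)%type.

Record grule := { ghead : gatom; gpos : list gatom; gneg : list gatom }.

Definition ground_atom (th : nat -> gterm) (a : ratom) : gatom :=
  (apred a, map (gsubst th) (aargs a)).

Definition ground_rule (r : rule) (th : nat -> gterm) : grule :=
  {| ghead := ground_atom th (rhead r);
     gpos := flat_map (fun l => match l with LPos a => [ground_atom th a] | LNeg _ => [] end) (rbody r);
     gneg := flat_map (fun l => match l with LNeg a => [ground_atom th a] | LPos _ => [] end) (rbody r) |}.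

Definition ground_prog (P : rule -> Prop) (M : structure) : grule -> Prop :=
  fun g => exists r th, P r /\ (forall x, wf_gterm (th x)) /\
           sat_inst M th (rconstr r) /\ g = ground_rule r th.

(* Gelfond-Lifschitz-style operator: Gamma_Q(J) = least model of Q^J *)
Definition closed_under (Q : grule -> Prop) (J X : gatom -> Prop) : Prop :=
  forall g, Q g -> (forall a, In a (gpos g) -> X a) ->
    (forall a, In a (gneg g) -> ~ J a) -> X (ghead g).

Definition Gamma (Q : grule -> Prop) (J : gatom -> Prop) : gatom -> Prop :=
  fun a => forall X, closed_under Q J X -> X a.

(* Well-founded model (Van Gelder's alternating fixpoint):
   true atoms = lfp(Gamma o Gamma), false atoms = complement of Gamma(lfp). *)
Definition wf_true (Q : grule -> Prop) : gatom -> Prop :=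
  fun a => forall X, (forall b, Gamma Q (Gamma Q X) b -> X b) -> X a.

Definition wf_false (Q : grule -> Prop) : gatom -> Prop :=
  fun a => ~ Gamma Q (wf_true Q) a.

Definition wf_entails (P : rule -> Prop) (T : formula -> Prop) (A : gatom) : Prop :=
  forall M : structure, is_model M T -> wf_true (ground_prog P M) A.

Definition eq_conj (eqc : PC S) (ts us : list gterm) : formula :=
  fold_right (fun tu phi => FAnd (FAtom eqc [to_term (fst tu); to_term (snd tu)]) phi)
             FTrue (combine ts us).

End Syntax.

(* Main.v *)
Require Import Defs.
From Stdlib Require Import List Arith FunctionalExtensionality.
Import ListNotations.

Section Aux.
Variable S : signature.

Fixpoint gsubst_ext (th th' : nat -> gterm S) (t : term S) {struct t} :
  (forall y, In y (occ t) -> th y = th' y) -> gsubst th t = gsubst th' t.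
Proof.
  destruct t as [x|f args]; simpl; intros H.
  - apply H; left; reflexivity.
  - f_equal. induction args as [|a l IHl]; simpl; [reflexivity|].
    simpl in H. f_equal.
    + apply gsubst_ext. intros y Hy. apply H. apply in_or_app. left; exact Hy.
    + apply IHl. intros y Hy. apply H. apply in_or_app. right; exact Hy.
Qed.

Fixpoint eval_to_term (M : structure S) rho (t : gterm S) {struct t} :
  eval M rho (to_term t) = geval M t.
Proof.
  destruct t as [f args]; simpl. f_equal.
  induction args as [|a l IHl]; simpl; [reflexivity|].
  rewrite eval_to_term, IHl. reflexivity.
Qed.

Definition rel (M : structure S) (a b : gatom S) : Prop :=
  fst a = fst b /\ Forall2 (fun v w => geval M v = geval M w /\ wf_gterm w) (snd a) (snd b).

Lemma key (M : structure S) : forall (args : list (term S)) ws th,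
  Forall (fun s => exists x, s = TVar S x) args -> NoDup (flat_map (@occ S) args) ->
  Forall2 (fun v w => geval M v = geval M w /\ wf_gterm w) (map (gsubst th) args) ws ->
  (forall y, wf_gterm (th y)) ->
  exists th', map (gsubst th') args = ws /\
    (forall y, ~ In y (flat_map (@occ S) args) -> th' y = th y) /\
    (forall y, geval M (th' y) = geval M (th y)) /\ (forall y, wf_gterm (th' y)).
Proof.
  induction args as [|a args IH]; intros ws th HF HN H2 Hw.
  - inversion H2; subst. exists th. repeat split; auto.
  - inversion HF as [|? ? [x Hx] HF']; subst.
    inversion H2 as [|? w ? ws' [Hg Hww] H2']; subst.
    simpl in HN. inversion HN as [|? ? Hnin HN']; subst.
    destruct (IH ws' th HF' HN' H2' Hw) as [th0 [E1 [E2 [E3 E4]]]].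
    exists (fun y => if Nat.eqb y x then w else th0 y). repeat split.
    + simpl. rewrite Nat.eqb_refl. f_equal. rewrite <- E1.
      apply map_ext_in. intros b Hb.
      rewrite Forall_forall in HF'. destruct (HF' b Hb) as [z ->]. simpl.
      destruct (Nat.eqb_spec z x); [|reflexivity]. subst.
      exfalso. apply Hnin. apply in_flat_map. exists (TVar S x). simpl; auto.
    + intros y Hy. destruct (Nat.eqb_spec y x).
      * subst. exfalso. apply Hy. left; reflexivity.
      * apply E2. intro Hc. apply Hy. right; exact Hc.
    + intros y. destruct (Nat.eqb_spec y x); [subst; simpl in Hg; auto | apply E3].
    + intros y. destruct (Nat.eqb_spec y x); auto.
Qed.

Lemma flat_map_ext_in {A B} (f g : A -> list B) (l : list A) :
  (forall a, In a l -> f a = g a) -> flat_map f l = flat_map g l.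
Proof.
  induction l; simpl; intros H; auto. rewrite H by auto. f_equal. auto.
Qed.

Lemma nodup_disj {A} (l l' : list A) : NoDup (l ++ l') -> forall y, In y l -> ~ In y l'.
Proof.
  induction l; simpl; intros H y Hy; [contradiction|].
  inversion H; subst. destruct Hy as [->|Hy].
  - intro Hc. apply H2. apply in_or_app. right; exact Hc.
  - apply IHl; auto.
Qed.

Lemma prog_closed (P : rule S -> Prop) (M : structure S)
  (hlin : forall r, P r -> linear_rule r) :
  forall g, ground_prog P M g -> forall h', rel M (ghead g) h' ->
  exists g', ground_prog P M g' /\ ghead g' = h' /\ gpos g' = gpos g /\ gneg g' = gneg g.
Proof.
  intros g [r [th [Pr [Hw [Hs ->]]]]] [q ws] [Hq H2].
  destruct (hlin r Pr) as [HF HN].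
  simpl in Hq, H2. subst q.
  destruct (key M (aargs (rhead r)) ws th HF (NoDup_app_remove_r _ _ HN) H2 Hw)
    as [th' [E1 [E2 [E3 E4]]]].
  assert (Hb : forall l, In l (rbody r) -> ground_atom th' (lit_atom l) = ground_atom th (lit_atom l)).
  { intros l Hl. unfold ground_atom. f_equal. apply map_ext_in. intros t Ht.
    apply gsubst_ext. intros y Hy. apply E2. intro Hc.
    apply (nodup_disj _ _ HN y Hc). apply in_flat_map. exists l. split; auto.
    apply in_flat_map. exists t. auto. }
  exists (ground_rule r th'). repeat split.
  - exists r, th'. repeat split; auto.
    unfold sat_inst in *.
    replace (fun x => geval M (th' x)) with (fun x => geval M (th x)); auto.
    apply functional_extensionality. intros; auto.
  - simpl. unfold ground_atom. rewrite E1. reflexivity.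
  - simpl. apply flat_map_ext_in. intros l Hl. specialize (Hb l Hl).
    destruct l; simpl in *; try rewrite Hb; reflexivity.
  - simpl. apply flat_map_ext_in. intros l Hl. specialize (Hb l Hl).
    destruct l; simpl in *; try rewrite Hb; reflexivity.
Qed.

Definition prog_cl (M : structure S) (Q : grule S -> Prop) :=
  forall g, Q g -> forall h', rel M (ghead g) h' ->
  exists g', Q g' /\ ghead g' = h' /\ gpos g' = gpos g /\ gneg g' = gneg g.

Lemma Gamma_closed M Q (HQ : prog_cl M Q) J a a' :
  rel M a a' -> Gamma Q J a -> Gamma Q J a'.
Proof.
  intros Hr HG X HX.
  set (Y := fun b => X b /\ forall b', rel M b b' -> X b').
  assert (HY : closed_under Q J Y).
  { intros g Hg Hpos Hneg. split.
    - apply HX; [exact Hg| |exact Hneg]. intros b Hb. exact (proj1 (Hpos b Hb)).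
    - intros b' Hb'. destruct (HQ g Hg b' Hb') as [g' [Hg' [<- [Ep En]]]].
      apply HX; [exact Hg'| |].
      + rewrite Ep. intros b Hb. exact (proj1 (Hpos b Hb)).
      + rewrite En. auto. }
  exact (proj2 (HG Y HY) a' Hr).
Qed.

Lemma Gamma_anti Q (J J' : gatom S -> Prop) :
  (forall b, J b -> J' b) -> forall a, Gamma Q J' a -> Gamma Q J a.
Proof.
  intros HJ a HG X HX. apply HG. intros g Hg Hp Hn. apply HX; auto.
  intros b Hb HJb. exact (Hn b Hb (HJ b HJb)).
Qed.

Lemma wf_true_closed M Q (HQ : prog_cl M Q) a a' :
  rel M a a' -> wf_true Q a -> wf_true Q a'.
Proof.
  intros Hr Ht X HX.
  set (Y := fun b => X b /\ forall b', rel M b b' -> X b').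
  assert (HY : forall b, Gamma Q (Gamma Q Y) b -> Y b).
  { assert (Hm : forall b, Gamma Q (Gamma Q Y) b -> Gamma Q (Gamma Q X) b).
    { apply Gamma_anti. apply Gamma_anti. intros b [Hb _]; exact Hb. }
    intros b Hb. split.
    - apply HX, Hm, Hb.
    - intros b' Hb'. apply HX, Hm. eapply Gamma_closed; eauto. }
  exact (proj2 (Ht Y HY) a' Hr).
Qed.

End Aux.

Theorem mainTheorem3 (S : signature)
  (hconst : exists c : Fsym S, farity S c = 0)
  (T : formula S -> Prop) (hT : forall phi, T phi -> wf_formula phi)
  (P : rule S -> Prop) (hP : forall r, P r -> wf_rule r)
  (eqc : PC S) (heqc : carity S eqc = 2)
  (heq_id : forall M : structure S, is_model M T ->
              forall d e : dom M, pint M eqc [d; e] <-> d = e)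
  (hlin : forall r, P r -> linear_rule r) :
  forall (p : PR S) (ts us : list (gterm S)),
    length ts = rarity S p -> length us = rarity S p ->
    Forall (@wf_gterm S) ts -> Forall (@wf_gterm S) us ->
    entails T (eq_conj eqc ts us) ->
    (wf_entails P T (p, ts) <-> wf_entails P T (p, us)).
Proof.
  intros p ts us Lt Lu Wt Wu He.
  destruct hconst as [c _].
  assert (HE : forall M, is_model M T -> Forall2 (fun v w => geval M v = geval M w) ts us).
  { intros M HM. specialize (He M HM (fun _ => fint M c [])).
    assert (Hl : length ts = length us) by congruence.
    clear Lt Lu Wt Wu. revert us Hl He.
    induction ts as [|t ts IH]; intros [|u us] Hl He; simpl in *; try discriminate; auto.
    destruct He as [H1 H2]. constructor.
    - apply (heq_id M HM) in H1. rewrite !eval_to_term in H1. exact H1.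
    - apply IH; auto. }
  split; intros H M HM; specialize (H M HM); specialize (HE M HM);
    (eapply wf_true_closed; [ intros g Hg h' Hr; eapply prog_closed; eauto | | exact H ]).
  - split; [reflexivity|]. simpl. clear -HE Wu. induction HE; constructor; inversion Wu; auto.
  - split; [reflexivity|]. simpl. clear -HE Wt. induction HE; constructor; inversion Wt; auto.
Qed.
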